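(* For every stratified space $(A,\Sigma)$ there exists a family of subsets $(W_X)_{X\in\Sigma}$ such that each $W_X$ is an open neighbourhood of $X$, and for $X,Y\in\Sigma$, $W_X$ intersects $W_Y$ if and only if $X$ and $Y$ are comparable (i.e. $X\le Y$ or $Y\le X$).
   Context: A stratified space $(A,\Sigma)$ is a second-countable metric space $A$ with a locally finite partition $\Sigma$ of $A$ into locally closed subsets (strata) such that whenever $Y\cap cl(X)\neq\emptyset$ one has $Y\subset cl(X)$; this is written $Y\le X$ (and $X$ is said to be incident to $Y$). The relation $\le$ is a partial order on $\Sigma$. *)

(* Defs.v *)
From HB Require Import structures.
From mathcomp Require Import all_boot all_order all_algebra.
From mathcomp Require Import all_classical all_reals topology normedtype.
Set Implicit Arguments. Unset Strict Implicit. Unset Printing Implicit Defensive.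
Import Order.TTheory GRing.Theory Num.Theory.
Local Open Scope classical_set_scope.

(* The space A is the whole carrier type T. *)

Definition is_partition {T : Type} (S : set (set T)) : Prop :=
  [/\ (forall X, S X -> X !=set0),
      (forall X Y, S X -> S Y -> X `&` Y !=set0 -> X = Y) &
      (forall x : T, exists2 X, S X & X x)].

Definition locally_finite_family {T : topologicalType} (S : set (set T)) : Prop :=
  forall x : T, exists2 U, nbhs x U & finite_set [set X | S X /\ X `&` U !=set0].

Definition locally_closed {T : topologicalType} (X : set T) : Prop :=
  exists U C, [/\ open U, closed C & X = U `&` C].

Definition strat_le {T : topologicalType} (Y X : set T) : Prop :=
  Y `<=` closure X.

Definition is_stratification {T : topologicalType} (S : set (set T)) : Prop :=
  [/\ is_partition S, locally_finite_family S,
      (forall X, S X -> locally_closed X) &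
      (forall X Y, S X -> S Y -> Y `&` closure X !=set0 -> strat_le Y X)].

(* Main.v *)
Require Import Defs.
From HB Require Import structures.
From mathcomp Require Import all_boot all_order all_algebra.
From mathcomp Require Import all_classical all_reals topology normedtype.
From mathcomp Require Import finmap.
Local Open Scope classical_set_scope.

Section Key.
Import Order.TTheory GRing.Theory Num.Theory.
Local Open Scope ring_scope.
Lemma key (R : realType) (T : pseudoMetricType R) (S : set (set T))
  (hS : is_stratification S) (X : set T) (x : T) : S X -> X x ->
  exists2 e : R, 0 < e & forall Y, S Y -> ~ strat_le X Y -> forall z, ball x e z -> ~ Y z.
Proof.
move=> SX Xx; case: hS => _ hlf _ hfr.
have [U Ux finF] := hlf x.
set F := [set Y | S Y /\ Y `&` U !=set0] in finF.
pose f (Y : set T) := ~` closure Y `|` [set _ | strat_le X Y].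
have nb1 := @filter_bigI T _ (fset_set F) f (nbhs x) (nbhs_filter x).
have hyp : forall Y, Y \in fset_set F -> nbhs x (f Y).
  move=> Y; rewrite in_fset_set // => /set_mem [SY _].
  have [le|nle] := pselect (strat_le X Y).
    by apply: filterS filterT => z _; right.
  apply: (@filterS _ _ _ (~` closure Y)); first by move=> z; left.
  apply: open_nbhs_nbhs; split; first by apply: closed_openC; exact: closed_closure.
  move=> cY; apply: nle; apply: hfr => //; by exists x.
have nb : nbhs x (U `&` (\bigcap_(Y in F) f Y)).
  apply: filterI => //; apply: filterS (nb1 hyp).
  move=> z cap Y FY; apply: cap; rewrite /= in_fset_set //; exact: mem_set.
have /nbhs_ballP [e e0 sub] := nb.
exists e => // Y SY nle z bz Yz.
have [Uz /= cap] := sub z bz.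
have FY : F Y by split => //; exists z.
have [] := cap Y FY.
  by apply; apply: subset_closure.
by [].
Qed.
End Key.

Section Main.
Import Order.TTheory GRing.Theory Num.Theory.
Local Open Scope ring_scope.
Lemma main_aux (R : realType) (T : pseudoMetricType R)
  (S : set (set T)) (hS : is_stratification S) :
  exists W : set T -> set T,
    (forall X, S X -> open (W X) /\ X `<=` W X) /\
    (forall X Y, S X -> S Y ->
       (W X `&` W Y !=set0 <-> (strat_le X Y \/ strat_le Y X))).
Proof.
have ex : forall p : set T * T, exists e : R, 0 < e /\ (S p.1 -> p.1 p.2 ->
   forall Y, S Y -> ~ strat_le p.1 Y -> forall z, ball p.2 e z -> ~ Y z).
  move=> [X x] /=.
  have [[SX Xx]|nh] := pselect (S X /\ X x).
    by have [e e0 h] := @key _ _ _ hS X x SX Xx; exists e; split.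
  by exists 1; split => // SX Xx; exfalso; apply: nh.
have [e he] := choice ex.
pose r X x := e (X, x) / 2.
have r0 X x : 0 < r X x by rewrite divr_gt0 //; case: (he (X, x)).
have rP X x : S X -> X x -> forall Y, S Y -> ~ strat_le X Y ->
    forall z, ball x (r X x + r X x) z -> ~ Y z.
  move=> SX Xx Y SY nle z bz; case: (he (X, x)) => _ /(_ SX Xx Y SY nle z); apply.
  by rewrite /r -splitr in bz.
exists (fun X => \bigcup_(x in X) (ball x (r X x))°).
have WX X x : X x -> (\bigcup_(x in X) (ball x (r X x))°) x.
  by move=> Xx; exists x => //; apply: nbhsx_ballx.
have oW X : open (\bigcup_(x in X) (ball x (r X x))°).
  by apply: bigcup_open => i _; apply: open_interior.
split; first by move=> X SX; split => // x; apply: WX.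
have dir X Y : S X -> S Y -> strat_le X Y ->
    (\bigcup_(x in X) (ball x (r X x))°) `&` (\bigcup_(x in Y) (ball x (r Y x))°) !=set0.
  move=> SX SY le; case: hS => [[ne _ _] _ _ _].
  have [x Xx] := ne X SX.
  have [y [Yy Wy]] := le x Xx _ (open_nbhs_nbhs (conj (oW X) (WX X x Xx))).
  by exists y; split => //; apply: WX.
move=> X Y SX SY; split; last first.
  case=> le; first exact: dir.
  by rewrite setIC; apply: dir.
case=> p [[x Xx /interior_subset bx] [y Yy /interior_subset by_]].
apply: contrapT => /not_orP [nXY nYX].
have bxy : ball x (r X x + r Y y) y by apply: ball_triangle bx (ball_sym by_).
have [le|le] := leP (r Y y) (r X x).
  apply: (rP X x SX Xx Y SY nXY y) => //.
  by apply: le_ball bxy; rewrite lerD2l.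
apply: (rP Y y SY Yy X SX nYX x) => //.
apply: ball_sym; apply: le_ball bxy; rewrite lerD2r; exact: ltW.
Qed.
End Main.

Theorem lemma1p3p17 (R : realType) (T : pseudoMetricType R)
  (hT : hausdorff_space T) (scT : @second_countable T)
  (S : set (set T)) (hS : is_stratification S) :
  exists W : set T -> set T,
    (forall X, S X -> open (W X) /\ X `<=` W X) /\
    (forall X Y, S X -> S Y ->
       (W X `&` W Y !=set0 <-> (strat_le X Y \/ strat_le Y X))).
Proof. by apply: main_aux. Qed.
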